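(* Let $\mathcal I,\mathcal J,\mathcal K$ be ideals on $\omega$ and let $X$ be a discrete topological space. (1) For every sequence $(f_n)$ in $\mathcal C(X)$, $\mathcal I$-pointwise convergence to $0$ implies $\mathcal J$-quasi-normal convergence to $0$ if and only if $|X|<\mathfrak b_s(\mathcal J,\mathcal J,\mathcal I)$. (2) For every sequence $(f_n)$ in $\mathcal C(X)$, $\mathcal I$-pointwise convergence to $0$ implies $\mathcal K$-$\sigma$-uniform convergence to $0$ if and only if $|X|<\mathfrak b_\sigma(\mathcal I,\mathcal K)$. (3) For every sequence $(f_n)$ in $\mathcal C(X)$, $\mathcal J$-quasi-normal convergence to $0$ implies $\mathcal K$-$\sigma$-uniform convergence to $0$ if and only if $|X|<\mathrm{add}_\omega(\mathcal J,\mathcal K)$.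
   Context: An ideal on $\omega$ is a family $\mathcal I\subseteq\mathcal P(\omega)$ closed under finite unions and subsets, containing all finite sets, with $\omega\notin\mathcal I$. A real sequence $(a_n)$ is $\mathcal I$-convergent to $0$ if $\{n:|a_n|\ge\varepsilon\}\in\mathcal I$ for all $\varepsilon>0$. For a sequence $(f_n)$ of real functions on a set $X$: $\mathcal I$-pointwise convergence to $0$ means $(f_n(x))$ is $\mathcal I$-convergent to $0$ for each $x$; $\mathcal I$-uniform means $\{n:\exists x\in X\,(|f_n(x)|\ge\varepsilon)\}\in\mathcal I$ for each $\varepsilon>0$; $\mathcal I$-$\sigma$-uniform means $X=\bigcup_{k\in\omega}X_k$ with $(f_n\restriction X_k)$ $\mathcal I$-uniformly convergent to $0$ for each $k$; $\mathcal I$-quasi-normal means there is a sequence $(\varepsilon_n)$ of positive reals $\mathcal I$-convergent to $0$ with $\{n:|f_n(x)|\ge\varepsilon_n\}\in\mathcal I$ for each $x$. $\mathcal C(X)$ = continuous real functions on $X$. Cardinals (convention $\min\emptyset=\infty$, $\kappa<\infty$ for all cardinals): $\widehat{\mathcal P}_{\mathcal I}$ = sequences $(A_n)\in\mathcal I^\omega$ of pairwise disjoint sets; $\mathcal P_{\mathcal I}$ = those with $\bigcup_nA_n=\omega$; $\mathcal M_{\mathcal I}$ = sequences $(E_k)\in\mathcal I^\omega$ with $E_k\subseteq E_{k+1}$. $\mathfrak b_s(\mathcal I,\mathcal J,\mathcal K)=\min\{|\mathcal E|:\mathcal E\subseteq\widehat{\mathcal P}_{\mathcal K}$ and for every $(A_n)\in\mathcal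 P_{\mathcal J}$ there is $(E_n)\in\mathcal E$ with $\bigcup_n(A_{n+1}\cap\bigcup_{i\le n}E_i)\notin\mathcal I\}$; $\mathfrak b_\sigma(\mathcal I,\mathcal J)=\min\{|\mathcal E|:\mathcal E\subseteq\mathcal M_{\mathcal I}$ and for every $(A_n)\in\mathcal M_{\mathcal J}$ there is $(E_n)\in\mathcal E$ with $E_n\not\subseteq A_n$ for infinitely many $n\}$; $\mathrm{add}_\omega(\mathcal I,\mathcal J)=\min\{|\mathcal A|:\mathcal A\subseteq\mathcal I$ and for every $(B_n)\in\mathcal J^\omega$ there is $A\in\mathcal A$ with $A\not\subseteq B_n$ for all $n\}$. *)

(* Defs.v *)
From Stdlib Require Import Reals.
Open Scope R_scope.

Definition nset := nat -> Prop.

Definition finite_nset (A : nset) : Prop := exists N, forall n, A n -> (n < N)%nat.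

Definition is_ideal (I : nset -> Prop) : Prop :=
  (forall A B, I A -> I B -> I (fun n => A n \/ B n)) /\
  (forall A B : nset, (forall n, B n -> A n) -> I A -> I B) /\
  (forall A, finite_nset A -> I A) /\
  ~ I (fun _ => True).

Definition Iconv0 (I : nset -> Prop) (a : nat -> R) : Prop :=
  forall eps, eps > 0 -> I (fun n => Rabs (a n) >= eps).

Definition Ipointwise {X : Type} (I : nset -> Prop) (f : nat -> X -> R) : Prop :=
  forall x, Iconv0 I (fun n => f n x).

Definition Iuniform_on {X : Type} (I : nset -> Prop) (f : nat -> X -> R) (Y : X -> Prop) : Prop :=
  forall eps, eps > 0 -> I (fun n => exists x, Y x /\ Rabs (f n x) >= eps).

Definition Isigma_uniform {X : Type} (I : nset -> Prop) (f : nat -> X -> R) : Prop :=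
  exists Xk : nat -> X -> Prop,
    (forall x, exists k, Xk k x) /\ (forall k, Iuniform_on I f (Xk k)).

Definition Iquasi_normal {X : Type} (I : nset -> Prop) (f : nat -> X -> R) : Prop :=
  exists eps : nat -> R,
    (forall n, eps n > 0) /\ Iconv0 I eps /\
    (forall x, I (fun n => Rabs (f n x) >= eps n)).

Definition card_le (A B : Type) : Prop := exists g : A -> B, forall a a', g a = g a' -> a = a'.
Definition card_lt (A B : Type) : Prop := card_le A B /\ ~ card_le B A.

Definition hatP (K : nset -> Prop) (A : nat -> nset) : Prop :=
  (forall n, K (A n)) /\ (forall n m k, n <> m -> A n k -> A m k -> False).
Definition Ppart (K : nset -> Prop) (A : nat -> nset) : Prop :=
  hatP K A /\ (forall k, exists n, A n k).
Definition Mseq (I : nset -> Prop) (E : nat -> nset) : Prop :=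
  (forall k, I (E k)) /\ (forall k n, E k n -> E (S k) n).

(* |X| < b_s(I,J,K)  (min over the empty family is infinity, so the
   condition is: every witnessing family has cardinality > |X|). *)
Definition lt_b_s (I J K : nset -> Prop) (X : Type) : Prop :=
  forall EE : (nat -> nset) -> Prop,
    (forall E, EE E -> hatP K E) ->
    (forall A, Ppart J A -> exists E, EE E /\
        ~ I (fun m => exists n, A (S n) m /\ exists i, (i <= n)%nat /\ E i m)) ->
    card_lt X {E : nat -> nset | EE E}.

Definition lt_b_sigma (I J : nset -> Prop) (X : Type) : Prop :=
  forall EE : (nat -> nset) -> Prop,
    (forall E, EE E -> Mseq I E) ->
    (forall A, Mseq J A -> exists E, EE E /\
        (forall N, exists n, (n >= N)%nat /\ ~ (forall m, E n m -> A n m))) ->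
    card_lt X {E : nat -> nset | EE E}.

Definition lt_add_omega (I J : nset -> Prop) (X : Type) : Prop :=
  forall AA : nset -> Prop,
    (forall A, AA A -> I A) ->
    (forall B : nat -> nset, (forall n, J (B n)) ->
        exists A, AA A /\ forall n, ~ (forall m, A m -> B n m)) ->
    card_lt X {A : nset | AA A}.

(* Main.v *)
Require Import Defs.
From Stdlib Require Import Reals Classical ClassicalEpsilon ProofIrrelevance Lia Lra.
From mathcomp Require classical_sets.
Open Scope R_scope.

Lemma card_total (A B : Type) : card_le A B \/ card_le B A.
Proof.
  pose (P := fun (M : (A * B)%type -> Prop) =>
    (forall a b b', M (a,b) -> M (a,b') -> b = b') /\
    (forall a a' b, M (a,b) -> M (a',b) -> a = a')).
  destruct (@classical_sets.Zorn_bigcup (A*B)%type P) as [M [[HM1 HM2] Hmax]].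
  - intros F HFP Htot. unfold classical_sets.bigcup. split.
    + intros a b b' [X1 F1 H1] [X2 F2 H2].
      destruct (Htot X1 X2 F1 F2) as [S|S].
      * apply (proj1 (HFP X2 F2) a); auto.
      * apply (proj1 (HFP X1 F1) a); auto.
    + intros a a' b [X1 F1 H1] [X2 F2 H2].
      destruct (Htot X1 X2 F1 F2) as [S|S].
      * apply (proj2 (HFP X2 F2) a a' b); auto.
      * apply (proj2 (HFP X1 F1) a a' b); auto.
  - destruct (classic (forall a, exists b, M (a,b))) as [Ha|Ha].
    + left. exists (fun a => proj1_sig (constructive_indefinite_description _ (Ha a))).
      intros a a' E.
      destruct (constructive_indefinite_description _ (Ha a)) as [b Hb].
      destruct (constructive_indefinite_description _ (Ha a')) as [b' Hb'].
      simpl in E. subst. eauto.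
    + destruct (classic (forall b, exists a, M (a,b))) as [Hb|Hb].
      * right. exists (fun b => proj1_sig (constructive_indefinite_description _ (Hb b))).
        intros b b' E.
        destruct (constructive_indefinite_description _ (Hb b)) as [a Ha'].
        destruct (constructive_indefinite_description _ (Hb b')) as [a' Ha''].
        simpl in E. subst. eauto.
      * exfalso.
        apply not_all_ex_not in Ha. destruct Ha as [a0 Ha0].
        apply not_all_ex_not in Hb. destruct Hb as [b0 Hb0].
        apply (Hmax (fun p => M p \/ p = (a0,b0))).
        -- split.
           ++ intros p Hp; left; exact Hp.
           ++ intros H. apply Ha0; exists b0; exact (H (a0,b0) (or_intror eq_refl)).
        -- split.
           ++ intros a b b' [H1|H1] [H2|H2].
              ** eauto.
              ** inversion H2; subst. exfalso; apply Ha0; eauto.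
              ** inversion H1; subst. exfalso; apply Ha0; eauto.
              ** inversion H1; inversion H2; subst; auto.
           ++ intros a a' b [H1|H1] [H2|H2].
              ** eauto.
              ** inversion H2; subst. exfalso; apply Hb0; eauto.
              ** inversion H1; subst. exfalso; apply Hb0; eauto.
              ** inversion H1; inversion H2; subst; auto.
Qed.

Definition hp (n : nat) : R := (1/2)^n.

Lemma hp_pos n : 0 < hp n.
Proof. unfold hp. apply pow_lt. lra. Qed.

Lemma hp_S n : hp (S n) = hp n / 2.
Proof. unfold hp. simpl. lra. Qed.

Lemma hp_lt a b : (a < b)%nat -> hp b < hp a.
Proof.
  induction b; intros H; [lia|].
  rewrite hp_S. pose proof (hp_pos b).
  destruct (Nat.eq_dec a b) as [->|Hn]; [lra|].
  assert (hp b < hp a) by (apply IHb; lia). lra.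
Qed.

Lemma hp_le a b : (a <= b)%nat -> hp b <= hp a.
Proof.
  intros H. destruct (Nat.eq_dec a b) as [->|Hn]; [lra|].
  left; apply hp_lt; lia.
Qed.

Lemma hp_small e : e > 0 -> exists N, hp N < e.
Proof.
  intros He. destruct (pow_lt_1_zero (1/2) ltac:(rewrite Rabs_right; lra) e He) as [N HN].
  exists N. specialize (HN N (le_n _)). rewrite Rabs_right in HN.
  - exact HN.
  - left; apply (hp_pos N).
Qed.

Lemma least (P : nat -> Prop) : (exists n, P n) -> exists n, P n /\ forall i, (i < n)%nat -> ~ P i.
Proof.
  intros [n Hn]. revert Hn. induction n as [n IH] using (well_founded_induction Wf_nat.lt_wf). intros Hn.
  destruct (classic (exists i, (i < n)%nat /\ P i)) as [[i [Hi Pi]]|Hno].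
  - exact (IH i Hi Pi).
  - exists n. split; auto. intros i Hi Pi. apply Hno. eauto.
Qed.

Definition val (P : nat -> Prop) : R :=
  match excluded_middle_informative (exists n, P n /\ forall i, (i < n)%nat -> ~ P i) with
  | left h => hp (proj1_sig (constructive_indefinite_description _ h))
  | right _ => 0
  end.

Lemma val_nonneg P : 0 <= val P.
Proof.
  unfold val. destruct excluded_middle_informative; [left; apply hp_pos| lra].
Qed.

Lemma val_ge P n : val P >= hp n <-> exists i, (i <= n)%nat /\ P i.
Proof.
  unfold val. destruct excluded_middle_informative as [h|h].
  - destruct (constructive_indefinite_description _ h) as [k [Pk Hk]]. simpl.
    split.
    + intros H. exists k. split; auto. destruct (Compare_dec.le_lt_dec k n); auto.
      pose proof (hp_lt n k l). lra.
    + intros [i [Hi Pi]]. destruct (Compare_dec.le_lt_dec k n) as [l|l].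
      * apply Rle_ge, hp_le; auto.
      * exfalso. apply (Hk i); auto. lia.
  - split.
    + intros H. pose proof (hp_pos n). lra.
    + intros Hex. exfalso. apply h. apply least.
      destruct Hex as [i [_ Pi]]. eauto.
Qed.

Lemma id_sub {I} (HI : is_ideal I) A {B : nset} : I A -> (forall n, B n -> A n) -> I B.
Proof. destruct HI as [_ [H _]]. intros HA Hs. eapply H; eauto. Qed.

Lemma id_union {I} (HI : is_ideal I) (A B : nset) : I A -> I B -> I (fun n => A n \/ B n).
Proof. destruct HI as [H _]. intros HA HB. apply H; auto. Qed.

Lemma id_fin I A : is_ideal I -> finite_nset A -> I A.
Proof. intros [_ [_ [H _]]] HA. apply H; auto. Qed.

Lemma id_empty I (A : nset) : is_ideal I -> (forall n, ~ A n) -> I A.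
Proof. intros HI HA. apply id_fin; auto. exists 0%nat. intros n Hn. exfalso; exact (HA n Hn). Qed.

Lemma id_bigunion I (A : nat -> nset) N : is_ideal I -> (forall i, (i <= N)%nat -> I (A i)) ->
  I (fun m => exists i, (i <= N)%nat /\ A i m).
Proof.
  intros HI. induction N; intros H.
  - apply id_sub with (A 0%nat); auto. intros m [i [Hi Ai]].
    replace i with 0%nat in Ai by lia. auto.
  - apply (id_sub HI (fun m => (exists i, (i <= N)%nat /\ A i m) \/ A (S N) m)).
    + apply (id_union HI (fun m => exists i, (i <= N)%nat /\ A i m) (A (S N))); auto.
    + intros m [i [Hi Ai]]. destruct (Nat.eq_dec i (S N)) as [->|Hn]; auto.
      left. exists i. split; auto. lia.
Qed.

Lemma card_lt_elim X Y : card_lt X Y -> ~ card_le Y X.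
Proof. intros [_ H]; exact H. Qed.

Lemma image_card_le (X Y : Type) (F : X -> Y) : card_le {y : Y | exists x, y = F x} X.
Proof.
  exists (fun e : {y : Y | exists x, y = F x} =>
    proj1_sig (constructive_indefinite_description (fun x => proj1_sig e = F x) (proj2_sig e))).
  intros [y1 h1] [y2 h2]. simpl.
  destruct (constructive_indefinite_description _ h1) as [x1 e1].
  destruct (constructive_indefinite_description _ h2) as [x2 e2]. simpl.
  intros ->. subst. f_equal. apply proof_irrelevance.
Qed.

Definition PF {X : Type} (EE : (nat -> nset) -> Prop) (g : {E : nat -> nset | EE E} -> X)
  (x : X) (n m : nat) : Prop :=
  exists E (h : EE E), g (exist _ E h) = x /\ E n m.

Lemma PF_cases {X : Type} EE (g : {E : nat -> nset | EE E} -> X) :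
  (forall a a', g a = g a' -> a = a') ->
  forall x, (exists E (h : EE E), g (exist _ E h) = x /\ forall n m, PF EE g x n m <-> E n m)
        \/ (forall n m, ~ PF EE g x n m).
Proof.
  intros Hg x. destruct (classic (exists E (h : EE E), g (exist _ E h) = x)) as [[E [h He]]|Hno].
  - left. exists E, h. split; auto. intros n m. split.
    + intros [E' [h' [He' Hm]]]. rewrite <- He in He'. apply Hg in He'.
      injection He'. intros ->. auto.
    + intros Hm. exists E, h. auto.
  - right. intros n m [E [h [He _]]]. apply Hno; eauto.
Qed.

Lemma pointwise_fam {X : Type} I EE (g : {E : nat -> nset | EE E} -> X) :
  is_ideal I -> (forall E, EE E -> forall n, I (E n)) ->
  (forall a a', g a = g a' -> a = a') ->
  Ipointwise I (fun m x => val (fun n => PF EE g x n m)).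
Proof.
  intros HI HE Hg x eps Heps.
  destruct (hp_small eps Heps) as [N HN].
  apply (id_sub HI (fun m => exists i, (i <= N)%nat /\ PF EE g x i m)).
  - destruct (PF_cases EE g Hg x) as [[E [h [_ Hiff]]]|Hno].
    + apply (id_sub HI (fun m => exists i, (i <= N)%nat /\ E i m)).
      * apply id_bigunion; auto.
      * intros m [i [Hi Pi]]. exists i. split; auto. apply Hiff; auto.
    + apply id_empty; auto. intros m [i [_ Pi]]. eapply Hno; eauto.
  - intros m Hm. apply val_ge. rewrite Rabs_right in Hm by (apply Rle_ge, val_nonneg). lra.
Qed.

Lemma card_lt_intro X Y : ~ card_le Y X -> card_lt X Y.
Proof. intros H. split; auto. destruct (card_total X Y); tauto. Qed.

Lemma p1_fwd I J X : is_ideal I -> is_ideal J ->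
  (forall f : nat -> X -> R, Ipointwise I f -> Iquasi_normal J f) -> lt_b_s J J I X.
Proof.
  intros HI HJ Hp EE hE hW. apply card_lt_intro. intros [g Hg].
  pose (f := fun m x => val (fun n => PF EE g x n m)).
  destruct (Hp f (pointwise_fam I EE g HI (fun E h => proj1 (hE E h)) Hg)) as [eps [Hpos [Hconv Hx]]].
  pose (A := fun n m => eps m >= hp n /\ forall i, (i<n)%nat -> eps m < hp i).
  assert (HA : Ppart J A).
  { split; [split|].
    - intros n. apply (id_sub HJ (fun m => Rabs (eps m) >= hp n)); [apply Hconv, hp_pos|].
      intros m [Hm _]. rewrite Rabs_right; [exact Hm| specialize (Hpos m); lra].
    - intros n n' k Hnn' [H1 H2] [H3 H4]. assert (n < n' \/ n' < n)%nat as [l|l] by lia.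
      + specialize (H4 n l); lra.
      + specialize (H2 n' l); lra.
    - intros k. destruct (hp_small (eps k) (Hpos k)) as [N HN].
      destruct (least (fun n => eps k >= hp n)) as [n [Hn Hl]]; [exists N; lra|].
      exists n. split; auto. intros i Hi. specialize (Hl i Hi). lra. }
  destruct (hW A HA) as [E [hEE Hnot]]. apply Hnot.
  apply (id_sub HJ (fun m => Rabs (f m (g (exist _ E hEE))) >= eps m)); [apply Hx|].
  intros m [n [[HA1 HA2] [i [Hi Ei]]]].
  assert (Hge : f m (g (exist _ E hEE)) >= hp n).
  { unfold f. apply val_ge. exists i. split; auto. exists E, hEE. auto. }
  specialize (HA2 n (Nat.lt_succ_diag_r n)).
  rewrite Rabs_right by (apply Rle_ge, val_nonneg). lra.
Qed.

Lemma p1_bwd I J X : is_ideal I -> is_ideal J -> lt_b_s J J I X ->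
  (forall f : nat -> X -> R, Ipointwise I f -> Iquasi_normal J f).
Proof.
  intros HI HJ Hlt f Hf.
  pose (Ex := fun x n m => Rabs (f m x) >= hp n /\ forall i, (i<n)%nat -> Rabs (f m x) < hp i).
  assert (Hclaim : exists A, Ppart J A /\ forall x,
     J (fun m => exists n, A (S n) m /\ exists i, (i <= n)%nat /\ Ex x i m)).
  { apply NNPP. intros Hno.
    refine (card_lt_elim _ _ (Hlt (fun E => exists x, E = Ex x) _ _) (image_card_le _ _ Ex)).
    - intros E [x ->]. split.
      + intros n. apply (id_sub HI (fun m => Rabs (f m x) >= hp n)); [apply Hf, hp_pos|].
        intros m [H _]; exact H.
      + intros n n' k Hnn' [H1 H2] [H3 H4]. assert (n < n' \/ n' < n)%nat as [l|l] by lia.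
        * specialize (H4 n l); lra.
        * specialize (H2 n' l); lra.
    - intros A HA.
      destruct (classic (exists x, ~ J (fun m => exists n, A (S n) m /\ exists i, (i <= n)%nat /\ Ex x i m))) as [[x Hx]|Hall].
      + exists (Ex x). split; [exists x; reflexivity| exact Hx].
      + exfalso. apply Hno. exists A. split; auto. intros x. apply NNPP. intros H. apply Hall; eauto. }
  destruct Hclaim as [A [[[HAJ HAd] HAc] HU]].
  pose (idx := fun m => proj1_sig (constructive_indefinite_description _ (HAc m))).
  assert (Hidx : forall m, A (idx m) m).
  { intro m. unfold idx. destruct constructive_indefinite_description; auto. }
  exists (fun m => hp (pred (idx m))). split; [intros; apply hp_pos|]. split.
  - intros d Hd. destruct (hp_small d Hd) as [N HN].
    apply (id_sub HJ (fun m => exists i, (i <= N)%nat /\ A i m)); [apply id_bigunion; auto|].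
    intros m Hm. exists (idx m). split; auto.
    rewrite Rabs_right in Hm by (left; apply hp_pos).
    destruct (Compare_dec.le_lt_dec (idx m) N) as [l|l]; auto. exfalso.
    pose proof (hp_le N (pred (idx m)) ltac:(lia)). lra.
  - intros x.
    apply (id_sub HJ (fun m => A 0%nat m \/ exists n, A (S n) m /\ exists i, (i<=n)%nat /\ Ex x i m));
      [apply id_union; auto|].
    intros m Hm. pose proof (Hidx m) as Hm2. destruct (idx m) as [|n] eqn:Ei.
    + left; auto.
    + right. exists n. split; auto. simpl in Hm.
      destruct (least (fun i => Rabs (f m x) >= hp i)) as [i [Hi Hl]]; [eauto|].
      exists i. split.
      * destruct (Compare_dec.le_lt_dec i n) as [l|l]; auto. exfalso; apply (Hl n l); auto.
      * split; auto. intros j Hj. specialize (Hl j Hj). lra.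
Qed.

Lemma p2_fwd I K X : is_ideal I -> is_ideal K ->
  (forall f : nat -> X -> R, Ipointwise I f -> Isigma_uniform K f) -> lt_b_sigma I K X.
Proof.
  intros HI HK Hp EE hE hW. apply card_lt_intro. intros [g Hg].
  pose (f := fun m x => val (fun n => PF EE g x n m)).
  destruct (Hp f (pointwise_fam I EE g HI (fun E h => proj1 (hE E h)) Hg)) as [Xk [Hcov Hu]].
  pose (A := fun n m => exists k, (k <= n)%nat /\ exists x, Xk k x /\ Rabs (f m x) >= hp n).
  assert (HA : Mseq K A).
  { split.
    - intros n.
      apply (id_sub HK (fun m => exists k, (k<=n)%nat /\ (fun k m => exists x, Xk k x /\ Rabs (f m x) >= hp n) k m)).
      + apply id_bigunion; auto. intros k _. apply Hu, hp_pos.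
      + intros m H; exact H.
    - intros n m [k [Hk [x [Hx Hm]]]]. exists k. split; [lia|]. exists x. split; auto.
      pose proof (hp_le n (S n) ltac:(lia)). lra. }
  destruct (hW A HA) as [E [hEE Hinf]].
  destruct (Hcov (g (exist _ E hEE))) as [k Hk].
  destruct (Hinf k) as [n [Hn Hnot]]. apply Hnot. intros m Em.
  exists k. split; auto. exists (g (exist _ E hEE)). split; auto.
  rewrite Rabs_right by (apply Rle_ge, val_nonneg). unfold f. apply val_ge.
  exists n. split; auto. exists E, hEE. auto.
Qed.

Lemma p2_bwd I K X : is_ideal I -> is_ideal K -> lt_b_sigma I K X ->
  (forall f : nat -> X -> R, Ipointwise I f -> Isigma_uniform K f).
Proof.
  intros HI HK Hlt f Hf.
  pose (Ex := fun x n m => Rabs (f m x) >= hp n).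
  assert (Hclaim : exists A, Mseq K A /\ forall x, exists N, forall n, (n >= N)%nat ->
            forall m, Ex x n m -> A n m).
  { apply NNPP. intros Hno.
    refine (card_lt_elim _ _ (Hlt (fun E => exists x, E = Ex x) _ _) (image_card_le _ _ Ex)).
    - intros E [x ->]. split.
      + intros n. apply Hf, hp_pos.
      + intros n m H. unfold Ex in *. pose proof (hp_le n (S n) ltac:(lia)); lra.
    - intros A HA. apply NNPP; intros Hn2. apply Hno. exists A. split; auto.
      intros x. apply NNPP; intros Hx. apply Hn2. exists (Ex x). split; [eauto|].
      intros N. apply NNPP; intros HN. apply Hx. exists N. intros n Hn m Hm.
      apply NNPP; intros Hnm. apply HN. exists n. split; [exact Hn|]. intros Hsub. apply Hnm; apply Hsub; auto. }
  destruct Hclaim as [A [[HAK HAinc] HAx]].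
  exists (fun k x => forall n, (n >= k)%nat -> forall m, Ex x n m -> A n m). split.
  - intros x. destruct (HAx x) as [N HN]. exists N. exact HN.
  - intros k e He. destruct (hp_small e He) as [N HN].
    apply (id_sub HK (A (max k N))); [apply HAK|]. intros m [x [Hx Hm]].
    apply (Hx (max k N)); [lia|]. unfold Ex.
    pose proof (hp_le N (max k N) (Nat.le_max_r _ _)). lra.
Qed.

Lemma p3_fwd J K X : is_ideal J -> is_ideal K ->
  (forall f : nat -> X -> R, Iquasi_normal J f -> Isigma_uniform K f) -> lt_add_omega J K X.
Proof.
  intros HJ HK Hp AA hA hW. apply card_lt_intro. intros [g Hg].
  pose (Q := fun x m => exists A (h : AA A), g (exist _ A h) = x /\ A m).
  pose (f := fun m x => if excluded_middle_informative (Q x m) then 1 else 0).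
  assert (Hf1 : forall m x, Q x m -> f m x = 1).
  { unfold f; intros; destruct excluded_middle_informative; tauto. }
  assert (Hf0 : forall m x, ~Q x m -> f m x = 0).
  { unfold f; intros; destruct excluded_middle_informative; tauto. }
  assert (HQN : Iquasi_normal J f).
  { exists hp. split; [intros; apply hp_pos|]. split.
    - intros d Hd. destruct (hp_small d Hd) as [N HN]. apply id_fin; auto. exists N.
      intros n Hn. rewrite Rabs_right in Hn by (left; apply hp_pos).
      destruct (Compare_dec.le_lt_dec N n) as [l|l]; auto.
      pose proof (hp_le N n l). lra.
    - intros x. destruct (classic (exists A (h : AA A), g (exist _ A h) = x)) as [[A [h Hx]]|Hno].
      + apply (id_sub HJ A); [apply hA; auto|]. intros m Hm. apply NNPP; intros Hnm.
        rewrite Hf0 in Hm.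
        * rewrite Rabs_R0 in Hm. pose proof (hp_pos m); lra.
        * intros [A' [h' [Hx' HA']]]. rewrite <- Hx in Hx'. apply Hg in Hx'.
          injection Hx'; intros ->. auto.
      + apply id_empty; auto. intros m Hm. rewrite Hf0 in Hm.
        * rewrite Rabs_R0 in Hm; pose proof (hp_pos m); lra.
        * intros [A' [h' [Hx' _]]]. apply Hno; eauto. }
  destruct (Hp f HQN) as [Xk [Hcov Hu]].
  destruct (hW (fun k m => exists x, Xk k x /\ Rabs (f m x) >= 1)) as [A [h Hnot]].
  { intros n. apply Hu. lra. }
  destruct (Hcov (g (exist _ A h))) as [k Hk]. apply (Hnot k). intros m Am.
  exists (g (exist _ A h)). split; auto. rewrite Hf1.
  - rewrite Rabs_R1; lra.
  - exists A, h; auto.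
Qed.

Lemma p3_bwd J K X : is_ideal J -> is_ideal K -> lt_add_omega J K X ->
  (forall f : nat -> X -> R, Iquasi_normal J f -> Isigma_uniform K f).
Proof.
  intros HJ HK Hlt f [eps [Hpos [Hconv Hx]]].
  destruct (classic (forall S, J S -> K S)) as [HJK|HJK].
  - pose (Ax := fun x m => Rabs (f m x) >= eps m).
    assert (Hclaim : exists B : nat -> nset, (forall n, K (B n)) /\
              forall x, exists n, forall m, Ax x m -> B n m).
    { apply NNPP. intros Hno.
      refine (card_lt_elim _ _ (Hlt (fun A => exists x, A = Ax x) _ _) (image_card_le _ _ Ax)).
      - intros A [x ->]. apply Hx.
      - intros B HB. apply NNPP; intros H2. apply Hno. exists B. split; auto.
        intros x. apply NNPP; intros H3. apply H2. exists (Ax x). split; [eauto|].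
        intros n Hsub. apply H3. eauto. }
    destruct Hclaim as [B [HB HBx]].
    exists (fun n x => forall m, Ax x m -> B n m). split; [exact HBx|].
    intros n d Hd. apply (id_sub HK (fun m => B n m \/ Rabs (eps m) >= d)).
    + apply id_union; auto.
    + intros m [x [Hxn Hm]]. destruct (classic (Ax x m)) as [H|H].
      * left. apply Hxn; auto.
      * right. unfold Ax in H. rewrite Rabs_right by (left; apply Hpos). lra.
  - apply not_all_ex_not in HJK as [S0 HS0]. apply imply_to_and in HS0 as [HJS HKS].
    assert (Hempty : X -> False).
    { intros x0. refine (card_lt_elim _ _ (Hlt (fun A => A = S0) _ _) _).
      - intros A ->; auto.
      - intros B HB. exists S0. split; auto. intros n Hsub. apply HKS.
        apply (id_sub HK (B n)); auto.
      - exists (fun _ => x0). intros [a ha] [b hb] _. subst. f_equal; try apply proof_irrelevance. }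
    exists (fun _ _ => True). split.
    + intros x; exfalso; auto.
    + intros k e He. apply id_empty; auto. intros m [x _]; auto.
Qed.

Theorem theorem4p6 (I J K : nset -> Prop) (X : Type) :
  is_ideal I -> is_ideal J -> is_ideal K ->
  ((forall f : nat -> X -> R, Ipointwise I f -> Iquasi_normal J f)
      <-> lt_b_s J J I X) /\
  ((forall f : nat -> X -> R, Ipointwise I f -> Isigma_uniform K f)
      <-> lt_b_sigma I K X) /\
  ((forall f : nat -> X -> R, Iquasi_normal J f -> Isigma_uniform K f)
      <-> lt_add_omega J K X).
Proof.
  intros HI HJ HK. split; [|split]; split.
  - apply p1_fwd; auto.
  - apply p1_bwd; auto.
  - apply p2_fwd; auto.
  - apply p2_bwd; auto.
  - apply p3_fwd; auto.
  - apply p3_bwd; auto.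
Qed.
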